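(* Let $\tau\in[0,1]$ and let $\tilde f,f$ be Gaussian densities on $\mathbb{R}^q$ with means $\tilde m_z,m_z$ and positive definite covariances $\tilde K_z,K_z$. Then $\mathcal{D}_\tau(\tilde f\|f)\ge0$, with equality if and only if $\tilde f=f$.
   Context: $\Delta m_z=\tilde m_z-m_z$, $L_z$ any matrix with $K_z=L_zL_z^T$, $M=L_z^{-1}\tilde K_zL_z^{-T}$, $\|v\|_A^2=v^TAv$, matrix log and powers of positive definite matrices are the usual ones. $\mathcal{D}_0(\tilde f\|f)=\|\Delta m_z\|^2_{K_z^{-1}}+\mathrm{tr}(-\log(\tilde K_zK_z^{-1})+\tilde K_zK_z^{-1}-I_q)$; for $0<\tau<1$, $\mathcal{D}_\tau(\tilde f\|f)=\frac1{1-\tau}\|\Delta m_z\|^2_{K_z^{-1}}+\mathrm{tr}(\frac1{\tau(\tau-1)}M^\tau+\frac1{1-\tau}\tilde K_zK_z^{-1}+\frac1\tau I_q)$; $\mathcal{D}_1(\tilde f\|f)=\delta(\Delta m_z)+\mathrm{tr}(M\log M-\tilde K_zK_z^{-1}+I_q)$, with $\delta(\Delta m_z)=0$ if $\Delta m_z=0$ and $+\infty$ otherwise. *)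

(* Defs.v *)
From HB Require Import structures.
From mathcomp Require Import all_boot all_order all_algebra.
From mathcomp Require Import boolp classical_sets reals ereal.
From mathcomp.analysis Require Import sequences exp trigo.
Set Implicit Arguments. Unset Strict Implicit. Unset Printing Implicit Defensive.
Import Order.TTheory GRing.Theory Num.Theory.
Local Open Scope ring_scope.

Section Defs.
Variable R : realType.

Definition posdef (q : nat) (K : 'M[R]_q) : Prop :=
  K^T = K /\ forall x : 'cV[R]_q, x != 0 -> 0 < (x^T *m K *m x) 0 0.

Definition eigdecomp (n : nat) (A : 'M[R]_n) (Pd : 'M[R]_n * 'rV[R]_n) : Prop :=
  Pd.1 \in unitmx /\ A = Pd.1 *m diag_mx Pd.2 *m invmx Pd.1.

(* Default 0 for non-diagonalizable A. *)
Definition matfun (n : nat) (f : R -> R) (A : 'M[R]_n) : 'M[R]_n :=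
  match pselect (exists Pd, eigdecomp A Pd) with
  | left h => let Pd := projT1 (cid h) in
              Pd.1 *m diag_mx (map_mx f Pd.2) *m invmx Pd.1
  | right _ => 0
  end.

Definition mlog (n : nat) (A : 'M[R]_n) : 'M[R]_n := matfun (@ln R) A.
Definition mpow (n : nat) (t : R) (A : 'M[R]_n) : 'M[R]_n :=
  matfun (fun x => powR x t) A.

Definition gauss_pdf (q : nat) (m : 'cV[R]_q) (K : 'M[R]_q) : 'cV[R]_q -> R :=
  fun x => expR (- (1/2) * ((x - m)^T *m invmx K *m (x - m)) 0 0)
           / Num.sqrt ((2 * pi) ^+ q * \det K).

(* D_tau(ft || f), L with K = L L^T *)
Definition Dtau (q : nat) (tau : R) (mt m : 'cV[R]_q) (Kt K L : 'M[R]_q)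
  : \bar R :=
  let dm := mt - m in
  let nrm := (dm^T *m invmx K *m dm) 0 0 in
  let A := Kt *m invmx K in
  let M := invmx L *m Kt *m invmx L^T in
  if tau == 0 then (nrm + \tr (- mlog A + A - 1%:M))%:E
  else if tau < 1 then
    ((1 - tau)^-1 * nrm
     + \tr ((tau * (tau - 1))^-1 *: mpow tau M + (1 - tau)^-1 *: A
            + tau^-1 *: 1%:M))%:E
  else if dm == 0 then (\tr (M *m mlog M - A + 1%:M))%:E
  else +oo%E.

End Defs.

(* Main.v *)
Require Import Defs.
From HB Require Import structures.
From mathcomp Require Import all_boot all_order all_algebra.
From mathcomp Require Import boolp classical_sets reals ereal.
From mathcomp.analysis Require Import sequences exp trigo.
From mathcomp Require Import spectral mxred sesquilinear.
From mathcomp.real_closed Require Import complex.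
Import Order.TTheory GRing.Theory Num.Theory.
Local Open Scope ring_scope.
Set Implicit Arguments. Unset Strict Implicit.
From mathcomp Require Import ring lra.
Lemma sym_eig (R : realType) n (S : 'M[R]_n) : S^T = S -> exists Pd, eigdecomp S Pd.
Proof.
case: n S => [|n] S hS.
  exists (1%:M, 0); split => /=; first by rewrite unitmx1.
  by apply/matrixP => -[].
pose f := real_complex R.
pose Sc := map_mx f S.
have Hh : Sc \is hermsymmx.
  apply: realsym_hermsym.
    apply/is_hermitianmxP; rewrite expr0 scale1r.
    by rewrite /Sc map_trmx hS; apply/matrixP => i j; rewrite !mxE.
  apply/mxOverP => i j; rewrite mxE /f.
  by apply/complex_realP; exists (S i j).
have /orthomx_spectralP Hs := hermitian_normalmx Hh.
have /mxOverP Hr := hermitian_spectral_diag_real Hh.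
set P := spectralmx Sc in Hs; set sp := spectral_diag Sc in Hs Hr.
have Pu : P \in unitmx by apply: spectral_unit.
pose rs := undup [seq complex.Re (sp 0 j) | j <- enum 'I_n.+1].
pose p := \prod_(x <- rs) ('X - x%:P).
have hp : horner_mx S p = 0.
  apply: (@map_mx_inj _ _ f).
  rewrite map_horner_mx map_prod_XsubC map_mx0.
  rewrite -/Sc Hs.
  have E : invmx P *m diag_mx sp *m P = invmx P *m diag_mx sp *m invmx (invmx P) by rewrite invmxK.
  rewrite E horner_mx_uconj; last by rewrite unitmx_inv.
  rewrite horner_mx_diag.
  have -> : map_mx (horner (\prod_(i <- rs) ('X - (f i)%:P))) sp = 0.
    apply/matrixP => i j; rewrite !mxE ord1.
    apply/eqP; rewrite -/(root _ _).
    rewrite -(big_map f xpredT (fun x => ('X - x%:P))) root_prod_XsubC.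
    apply/mapP; exists (complex.Re (sp 0 j)); last by rewrite /f RRe_real.
    by rewrite mem_undup; apply/mapP; exists j => //; rewrite mem_enum.
  have -> : diag_mx (0 : 'rV[R[i]]_n.+1) = 0 by apply/matrixP => a b; rewrite !mxE mul0rn.
  by rewrite mulmx0 mul0mx.
have [Q Qu] : exists2 Q : 'M_n.+1, Q \in unitmx & similar_diag Q S.
  apply/diagonalizableP; exists rs; first exact: undup_uniq.
  exact: mxminpoly_min.
move=> /similar_diagPex [D] /(similarLR Qu) HS.
exists (invmx Q, D); split => /=; first by rewrite unitmx_inv.
by rewrite HS conjumx ?unitmx_inv // invmxK.
Qed.
Section S.
Variable R : realType.

Lemma matfun_spec n (A : 'M[R]_n) : (exists Pd, eigdecomp A Pd) ->
  exists Pd, eigdecomp A Pd /\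
    forall f, matfun f A = Pd.1 *m diag_mx (map_mx f Pd.2) *m invmx Pd.1.
Proof.
move=> h; rewrite /matfun; case: pselect => [h'|]; last by [].
by exists (projT1 (cid h')); split => //; exact: (projT2 (cid h')).
Qed.

Lemma eig_pos n (Kt K : 'M[R]_n) (P : 'M[R]_n) (d : 'rV[R]_n) :
  (forall x : 'cV[R]_n, x != 0 -> 0 < (x^T *m Kt *m x) 0 0) ->
  (forall x : 'cV[R]_n, x != 0 -> 0 < (x^T *m K *m x) 0 0) -> K \in unitmx -> P \in unitmx ->
  Kt *m invmx K = P *m diag_mx d *m invmx P -> forall i, 0 < d 0 i.
Proof.
move=> hKt hK Ku Pu E i.
pose v := P *m (delta_mx i (ord0 : 'I_1) : 'cV[R]_n).
have vn0 : v != 0.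
  apply/eqP => v0.
  have : (delta_mx i (ord0 : 'I_1) : 'cV[R]_n) = invmx P *m v by rewrite /v mulKmx.
  rewrite v0 mulmx0 => /matrixP/(_ i ord0); rewrite !mxE !eqxx /= => /eqP.
  by rewrite oner_eq0.
have Av : Kt *m invmx K *m v = d 0 i *: v.
  rewrite E /v -!mulmxA mulKmx // mul_diag_mx.
  rewrite scalemxAr; congr (_ *m _).
  apply/matrixP => a b; rewrite !mxE; have [->|ne] := eqVneq a i; first by [].
  by rewrite /= !mulr0.
pose w := invmx K *m v.
have Kw : K *m w = v by rewrite /w mulKVmx.
have wn0 : w != 0 by apply/eqP => w0; move: vn0; rewrite -Kw w0 mulmx0 eqxx.
have Ktw : Kt *m w = d 0 i *: (K *m w) by rewrite Kw /w mulmxA Av.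
have := hKt _ wn0; rewrite -mulmxA Ktw -scalemxAr mxE mulmxA.
by rewrite pmulr_lgt0 // hK.
Qed.

Lemma xTx_gt0 n (x : 'cV[R]_n) : x != 0 -> 0 < (x^T *m x) 0 0.
Proof.
move=> xn0.
have hge : forall k : 'I_n, true -> 0 <= x^T 0 k * x k 0.
  by move=> k _; rewrite mxE -expr2 sqr_ge0.
rewrite mxE lt_def sumr_ge0 ?andbT //.
apply: contra xn0 => /eqP H; have H2 := psumr_eq0P hge H.
apply/eqP/matrixP => k j; rewrite ord1 mxE.
have := H2 k isT; rewrite mxE => /eqP; rewrite mulf_eq0 orbb => /eqP.
done.
Qed.

Lemma posdef_diag n (K : 'M[R]_n) : posdef K ->
  exists P d, [/\ P \in unitmx, K = P *m diag_mx d *m invmx P & forall i, 0 < d 0 i].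
Proof.
move=> [hs hp]; have [[P d] [/= Pu E]] := @sym_eig _ _ _ hs.
exists P, d; split => //.
apply: (@eig_pos _ K 1%:M P d hp) => //; last by rewrite invmx1 mulmx1.
  move=> x xn0; rewrite mulmx1.
  exact: xTx_gt0.
by rewrite unitmx1.
Qed.

Lemma posdef_det n (K : 'M[R]_n) : posdef K -> 0 < \det K.
Proof.
move=> /posdef_diag [P [d [Pu -> dp]]].
rewrite !det_mulmx det_inv det_diag mulrAC divrr ?mul1r; last by rewrite -unitmxE.
by apply: prodr_gt0 => i _; exact: dp.
Qed.

Lemma posdef_unit n (K : 'M[R]_n) : posdef K -> K \in unitmx.
Proof. by move=> /posdef_det h; rewrite unitmxE unitfE gt_eqF. Qed.

Lemma qf_congr n (B S : 'M[R]_n) (x : 'cV[R]_n) :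
  x^T *m (B^T *m S *m B) *m x = (B *m x)^T *m S *m (B *m x).
Proof. by rewrite trmx_mul !mulmxA. Qed.

Lemma unit_ne0 n (B : 'M[R]_n) (x : 'cV[R]_n) : B \in unitmx -> x != 0 -> B *m x != 0.
Proof.
move=> Bu xn0; apply: contra xn0 => /eqP h.
by rewrite -(mulKmx Bu x) h mulmx0.
Qed.

Lemma posdef_congr n (B S : 'M[R]_n) : B \in unitmx -> posdef S -> posdef (B^T *m S *m B).
Proof.
move=> Bu [hs hp]; split; first by rewrite !trmx_mul trmxK hs mulmxA.
by move=> x xn0; rewrite qf_congr; apply: hp; exact: unit_ne0.
Qed.

Lemma posdef_inv n (K : 'M[R]_n) : posdef K -> posdef (invmx K).
Proof.
move=> hK; have Ku := posdef_unit hK; have [hs _] := hK.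
have -> : invmx K = (invmx K)^T *m K *m invmx K.
  by rewrite trmx_inv hs mulVmx // mul1mx.
by apply: posdef_congr => //; rewrite unitmx_inv.
Qed.

End S.
Section SC.
Variable R : realType.

Lemma sc0 (x : R) : 0 < x -> 0 <= x - ln x - 1 /\ (x - ln x - 1 = 0 -> x = 1).
Proof.
move=> xp; have xP : x \in Num.pos by rewrite posrE.
have := expR_ge1Dx (ln x); rewrite lnK // => h; split; first lra.
move=> e; apply/eqP; apply: contraT => nx.
have : ln x != 0 by rewrite ln_eq0.
move=> /expR_gt1Dx; rewrite lnK //; lra.
Qed.

Lemma sc1 (x : R) : 0 < x -> 0 <= x * ln x - x + 1 /\ (x * ln x - x + 1 = 0 -> x = 1).
Proof.
move=> xp; have xP : x \in Num.pos by rewrite posrE.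
have xn0 : x != 0 by rewrite gt_eqF.
have [h1 h2] : 0 <= x^-1 - ln x^-1 - 1 /\ (x^-1 - ln x^-1 - 1 = 0 -> x^-1 = 1) by apply: sc0; rewrite invr_gt0.
have E : x * ln x - x + 1 = x * (x^-1 - ln x^-1 - 1).
  rewrite lnV // mulrBr mulrBr mulfV // mulrN opprK mulr1; lra.
rewrite E; split; first by rewrite mulr_ge0 // ltW.
move=> /eqP; rewrite mulf_eq0 (negbTE xn0) /= => /eqP /h2.
by move=> /eqP; rewrite invr_eq1 => /eqP.
Qed.

Lemma sct (t x : R) : 0 < t < 1 -> 0 < x ->
  0 <= t * x + (1 - t) - powR x t /\ (t * x + (1 - t) - powR x t = 0 -> x = 1).
Proof.
move=> /andP[t0 t1] xp; have xP : x \in Num.pos by rewrite posrE.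
set y := ln x.
have Ex : x = expR y by rewrite /y lnK.
have Ep : powR x t = expR (t * y) by rewrite Ex -expRM mulrC.
rewrite Ep; set e := expR (t * y).
have ep : 0 < e by apply: expR_gt0.
have Ey : expR y = e * expR ((1 - t) * y) by rewrite -expRD; congr expR; ring.
have E1 : 1 = e * expR (- (t * y)) by rewrite expRxMexpNx_1.
have h1 := expR_ge1Dx ((1 - t) * y).
have h2 := expR_ge1Dx (- (t * y)).
have key : t * x + (1 - t) - e =
   t * (e * (expR ((1 - t) * y) - (1 + (1 - t) * y)))
   + (1 - t) * (e * (expR (- (t * y)) - (1 - t * y))).
  transitivity (t * x + (1 - t) * (e * expR (- (t * y))) - e).
    by rewrite -E1 mulr1.
  rewrite {1}Ex Ey; ring.
have g1 : 0 <= e * (expR ((1 - t) * y) - (1 + (1 - t) * y)).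
  by apply: mulr_ge0; [exact: ltW | rewrite subr_ge0].
have g2 : 0 <= e * (expR (- (t * y)) - (1 - t * y)).
  by apply: mulr_ge0; [exact: ltW | rewrite subr_ge0].
split; first by rewrite key; nra.
move=> e0; apply/eqP; apply: contraT => nx.
have yn0 : y != 0 by rewrite /y ln_eq0.
have : (1 - t) * y != 0 by rewrite mulf_eq0 negb_or yn0 andbT; lra.
move=> /expR_gt1Dx h3.
have g3 : 0 < e * (expR ((1 - t) * y) - (1 + (1 - t) * y)).
  by apply: mulr_gt0; rewrite // subr_gt0.
move: e0; rewrite key; nra.
Qed.
End SC.
Section G.
Variable R : realType.
Definition B n (S : 'M[R]_n) (a b : 'cV[R]_n) := (a^T *m S *m b) 0 0.

Lemma BDl n S (a b c : 'cV[R]_n) : B S (a + b) c = B S a c + B S b c.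
Proof. by rewrite /B linearD /= !mulmxDl mxE. Qed.
Lemma BDr n S (a b c : 'cV[R]_n) : B S c (a + b) = B S c a + B S c b.
Proof. by rewrite /B !mulmxDr mxE. Qed.
Lemma BNl n S (a c : 'cV[R]_n) : B S (- a) c = - B S a c.
Proof. by rewrite /B linearN /= !mulNmx mxE. Qed.
Lemma BNr n S (a c : 'cV[R]_n) : B S c (- a) = - B S c a.
Proof. by rewrite /B !mulmxN mxE. Qed.
Lemma Bsym n (S : 'M[R]_n) a b : S^T = S -> B S a b = B S b a.
Proof.
move=> hS; rewrite /B.
have -> : (a^T *m S *m b) 0 0 = ((a^T *m S *m b)^T) 0 0 by rewrite [RHS]mxE.
by rewrite !trmx_mul trmxK hS mulmxA.
Qed.
Lemma Bdelta n (S : 'M[R]_n) i j :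
  B S (delta_mx i (ord0 : 'I_1)) (delta_mx j (ord0 : 'I_1)) = S i j.
Proof.
by rewrite /B trmx_delta -rowE -colE !mxE.
Qed.

Lemma bdiff2 n (S : 'M[R]_n) y u :
  B S (y + u) (y + u) + B S (y - u) (y - u) - 2 * B S y y = 2 * B S u u.
Proof. rewrite !(BDl, BDr, BNl, BNr); ring. Qed.

Lemma polar n (S : 'M[R]_n) u v : S^T = S ->
  B S (u + v) (u + v) = B S u u + 2 * B S u v + B S v v.
Proof. move=> hS; rewrite !(BDl, BDr) (Bsym u v hS); ring. Qed.

Lemma B00 n (S : 'M[R]_n) : B S 0 0 = 0.
Proof. by rewrite /B mulmx0 mxE. Qed.

Lemma gauss_eq q (mt m : 'cV[R]_q) Kt K : posdef Kt -> posdef K ->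
  gauss_pdf mt Kt = gauss_pdf m K -> mt = m /\ Kt = K.
Proof.
move=> hKt hK H.
set ct := Num.sqrt ((2 * pi) ^+ q * \det Kt).
set c := Num.sqrt ((2 * pi) ^+ q * \det K).
have ctp : 0 < ct.
  by rewrite sqrtr_gt0 mulr_gt0 // ?exprn_gt0 ?mulr_gt0 ?pi_gt0 // posdef_det.
have cp : 0 < c.
  by rewrite sqrtr_gt0 mulr_gt0 // ?exprn_gt0 ?mulr_gt0 ?pi_gt0 // posdef_det.
set St := invmx Kt; set S := invmx K.
have hq : forall x, B St (x - mt) (x - mt) = B S (x - m) (x - m) + 2 * (ln c - ln ct).
  move=> x; have := congr1 (fun g => ln (g x)) H; rewrite /gauss_pdf /= -/ct -/c.
  rewrite !ln_div ?posrE ?expR_gt0 // !expRK /B -/St -/S => h; lra.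
have [hSt pSt] := posdef_inv hKt; have [hS pS] := posdef_inv hK.
rewrite -/St in hSt pSt; rewrite -/S in hS pS.
have hquad : forall u, B St u u = B S u u.
  move=> u; have h1 := hq u; have h2 := hq (-u); have h3 := hq 0.
  have e1 := bdiff2 St (-mt) u; have e2 := bdiff2 S (-m) u.
  rewrite (addrC u (- mt)) (addrC u (- m)) in h1.
  rewrite (addrC (- u) (- mt)) (addrC (- u) (- m)) in h2.
  rewrite !sub0r in h3; lra.
have hbil : forall u v, B St u v = B S u v.
  move=> u v; have := polar u v hSt; have := polar u v hS.
  rewrite !hquad; lra.
have eS : St = S by apply/matrixP => i j; rewrite -!Bdelta hbil.
have eK : Kt = K by rewrite -(invmxK Kt) -(invmxK K) -/St -/S eS.
split => //.
rewrite eS in hq.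
have h1 := hq mt; have h2 := hq m.
rewrite subrr B00 in h1; rewrite subrr B00 -opprB BNl BNr opprK in h2.
have w0 : B S (mt - m) (mt - m) = 0 by lra.
apply/eqP; rewrite -subr_eq0; apply: contraT => wn0.
by have := pS _ wn0; rewrite -/(B S _ _) w0 ltxx.
Qed.

Lemma invmxM' n (A C : 'M[R]_n) : A \in unitmx -> C \in unitmx ->
  invmx (A *m C) = invmx C *m invmx A.
Proof.
move=> Au Cu; have ACu : A *m C \in unitmx by rewrite unitmx_mul Au.
have h : (A *m C) *m (invmx C *m invmx A) = 1%:M.
  by rewrite mulmxA mulmxK // mulmxV.
by rewrite -[LHS]mulmx1 -h mulmxA mulVmx // mul1mx.
Qed.

Lemma tr_sim n (P X : 'M[R]_n) : P \in unitmx -> \tr (P *m X *m invmx P) = \tr X.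
Proof. by move=> Pu; rewrite mxtrace_mulC mulmxA mulVmx // mul1mx. Qed.

Lemma tr_conj n (P : 'M[R]_n) d : P \in unitmx ->
  \tr (P *m diag_mx d *m invmx P) = \sum_i d 0 i.
Proof. by move=> Pu; rewrite mxtrace_mulC mulmxA mulVmx // mul1mx mxtrace_diag. Qed.

Lemma eig_one n (P X : 'M[R]_n) d : P \in unitmx -> X = P *m diag_mx d *m invmx P ->
  (X = 1%:M <-> forall i, d 0 i = 1).
Proof.
move=> Pu ->; split.
  move=> h i; have : diag_mx d = 1%:M.
    have E : invmx P *m (P *m diag_mx d *m invmx P) *m P = diag_mx d.
      by rewrite !mulmxA mulVmx // mul1mx mulmxKV.
    by rewrite -E h mulmx1 mulVmx.
  by move=> /matrixP /(_ i i); rewrite !mxE eqxx.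
move=> h; have -> : diag_mx d = 1%:M.
  by apply/matrixP => i j; rewrite !mxE h.
by rewrite mulmx1 mulmxV.
Qed.

Lemma finish n (nrm c : R) (f : R -> R) (d : 'I_n -> R) (P1 P2 : Prop) :
  0 < c -> 0 <= nrm -> (nrm = 0 <-> P1) -> (forall x, 0 < x -> 0 <= f x) ->
  (forall x, 0 < x -> f x = 0 -> x = 1) -> f 1 = 0 -> (forall i, 0 < d i) ->
  ((forall i, d i = 1) <-> P2) ->
  0 <= c * nrm + \sum_i f (d i) /\ (c * nrm + \sum_i f (d i) = 0 <-> P1 /\ P2).
Proof.
move=> cp n0 [n1 n2] f0 f1 f2 dp [e1 e2].
have s0 : 0 <= \sum_i f (d i) by apply: sumr_ge0 => i _; apply: f0.
have cn0 : 0 <= c * nrm by rewrite mulr_ge0 // ltW.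
split; first by rewrite addr_ge0.
split.
  move=> h; have hn : c * nrm = 0 by lra.
  have hs : \sum_i f (d i) = 0 by lra.
  split; first by apply: n1; move: hn => /eqP; rewrite mulf_eq0 gt_eqF //= => /eqP.
  apply: e1 => i; apply: f1 => //.
  by apply: (psumr_eq0P (fun i _ => f0 _ (dp i)) hs).
move=> [p1 p2]; rewrite n2 // mulr0 add0r.
by apply: big1 => i _; rewrite e2.
Qed.
End G.

Lemma efin_fin (R : realType) (v : R) (P : Prop) : 0 <= v /\ (v = 0 <-> P) ->
  (0%:E <= v%:E)%E /\ (v%:E = 0%:E <-> P).
Proof.
move=> [h1 [h2 h3]]; split; first by rewrite lee_fin.
by split; [case=> /h2 | move=> /h3 ->].
Qed.

Lemma sum_map (R : realType) q (f : R -> R) (d : 'rV[R]_q) :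
  \sum_i (map_mx f d) 0 i = \sum_i f (d 0 i).
Proof. by apply: eq_bigr => i _; rewrite mxE. Qed.

Lemma sum_row (R : realType) q (f : R -> R) (d : 'rV[R]_q) :
  \sum_i (\row_j (d 0 j * (map_mx f d) 0 j)) 0 i = \sum_i d 0 i * f (d 0 i).
Proof. by apply: eq_bigr => i _; rewrite !mxE. Qed.

Lemma sum1 (R : realType) q : \sum_(i < q) (1 : R) = q%:R.
Proof. by rewrite sumr_const card_ord. Qed.

Unset Implicit Arguments.
Theorem proposition1 (R : realType) (q : nat) (tau : R)
  (mt m : 'cV[R]_q) (Kt K L : 'M[R]_q) :
  0 <= tau <= 1 -> posdef Kt -> posdef K -> K = L *m L^T ->
  (0%:E <= Dtau tau mt m Kt K L)%E /\
  (Dtau tau mt m Kt K L = 0%:E <-> gauss_pdf mt Kt = gauss_pdf m K).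
Proof.
move=> /andP[t0 t1] hKt hK EK.
have Ku := posdef_unit hK.
have Lu : L \in unitmx by move: Ku; rewrite EK unitmx_mul => /andP[].
have LTu : L^T \in unitmx by rewrite unitmx_tr.
set A := Kt *m invmx K.
set M := invmx L *m Kt *m invmx L^T.
have hM : posdef M.
  have -> : M = (invmx L^T)^T *m Kt *m invmx L^T by rewrite trmx_inv trmxK.
  by apply: posdef_congr => //; rewrite unitmx_inv.
have AM : A = L *m M *m invmx L.
  by rewrite /A /M EK invmxM' // !mulmxA mulmxV // mul1mx.
have [[P1 d1] [[/= P1u EM] FM]] := matfun_spec (@sym_eig _ _ _ hM.1).
have d1p : forall i, 0 < d1 0 i.
  apply: (@eig_pos _ _ M 1%:M P1 d1 hM.2 _ _ P1u); last by rewrite invmx1 mulmx1.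
    by move=> x xn0; rewrite mulmx1; apply: xTx_gt0.
  exact: unitmx1.
have exA : exists Pd, eigdecomp A Pd.
  exists (L *m P1, d1); split; first by rewrite /= unitmx_mul Lu.
  by rewrite AM EM /= invmxM' // !mulmxA.
have [[P2 d2] [[/= P2u EA] FA]] := matfun_spec exA.
have d2p : forall i, 0 < d2 0 i := eig_pos hKt.2 hK.2 Ku P2u EA.
have trA1 : \tr A = \sum_i d1 0 i by rewrite AM tr_sim // EM tr_conj.
have trA2 : \tr A = \sum_i d2 0 i by rewrite EA tr_conj.
have KE1 : (forall i, d1 0 i = 1) <-> Kt = K.
  rewrite -(eig_one P1u EM); split => [M1|eK].
    have -> : Kt = L *m M *m L^T by rewrite /M !mulmxA mulmxV // mul1mx mulmxKV.
    by rewrite M1 mulmx1 EK.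
  by rewrite /M eK EK !mulmxA mulVmx // mul1mx mulmxV.
have KE2 : (forall i, d2 0 i = 1) <-> Kt = K.
  rewrite -(eig_one P2u EA); split => [A1|eK].
    have -> : Kt = A *m K by rewrite /A mulmxKV.
    by rewrite A1 mul1mx.
  by rewrite /A eK mulmxV.
have [hS pS] := posdef_inv hK.
have nrm0 : 0 <= B (invmx K) (mt - m) (mt - m).
  have [->|wn0] := eqVneq (mt - m) 0; first by rewrite B00.
  exact/ltW/pS.
have nrmE : B (invmx K) (mt - m) (mt - m) = 0 <-> mt = m.
  split; last by move=> ->; rewrite subrr B00.
  move=> h; apply/eqP; rewrite -subr_eq0; apply: contraT => wn0.
  by have := pS _ wn0; rewrite -/(B _ _ _) h ltxx.
have GE : gauss_pdf mt Kt = gauss_pdf m K <-> mt = m /\ Kt = K.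
  by split; [exact: gauss_eq | case=> -> ->].
rewrite GE /Dtau /= -/A -/M -/(B _ _ _).
set nrm := B (invmx K) (mt - m) (mt - m) in nrm0 nrmE *.
have [te0|tn0] := boolP (tau == 0).
  apply: efin_fin.
  have T : \tr (- mlog A + A - 1%:M) = \sum_i (fun x => x - ln x - 1) (d2 0 i).
    rewrite /mlog FA raddfB raddfD raddfN /= tr_conj // trA2 mxtrace1.
    rewrite sum_map.
    rewrite !sumrB sum1; ring.
  rewrite T -[nrm]mul1r.
  have H1 : forall x : R, 0 < x -> 0 <= x - ln x - 1 by move=> x hx; case: (sc0 hx).
  have H2 : forall x : R, 0 < x -> x - ln x - 1 = 0 -> x = 1 by move=> x hx; case: (sc0 hx).
  have H3 : (1 : R) - ln 1 - 1 = 0 by rewrite ln1; ring.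
  exact: (@finish _ q nrm 1 (fun x => x - ln x - 1) (fun i => d2 0 i) (mt = m) (Kt = K) ltr01 nrm0 nrmE H1 H2 H3 d2p KE2).
have tp : 0 < tau by rewrite lt_def tn0.
rewrite /=; have [tl1|tg1] := boolP (tau < 1).
  apply: efin_fin.
  pose f := fun x : R => (tau * (tau - 1))^-1 * powR x tau + (1 - tau)^-1 * x + tau^-1.
  have T : \tr ((tau * (tau - 1))^-1 *: mpow tau M + (1 - tau)^-1 *: A + tau^-1 *: 1%:M)
      = \sum_i f (d1 0 i).
    rewrite /mpow FM !raddfD /= !mxtraceZ tr_conj // trA1 mxtrace1.
    rewrite sum_map.
    rewrite /f !big_split /= -!mulr_sumr. by rewrite sumr_const card_ord mulr_natr.
  have t1n : 1 - tau != 0 by rewrite subr_eq0 eq_sym lt_eqF.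
  have fE : forall x, f x = (tau * x + (1 - tau) - powR x tau) / (tau * (1 - tau)).
    move=> x; rewrite /f; field.
    rewrite t1n tn0 /=.
    have -> : tau - 1 = - (1 - tau) by rewrite opprB.
    by rewrite oppr_eq0 t1n.
  have tt : 0 < tau * (1 - tau) by rewrite mulr_gt0 // subr_gt0.
  rewrite T.
  have H0 : 0 < (1 - tau)^-1 by rewrite invr_gt0 subr_gt0.
  have ht : 0 < tau < 1 by rewrite tp tl1.
  have H1 : forall x, 0 < x -> 0 <= f x.
    move=> x hx; rewrite fE divr_ge0 ?(ltW tt) //.
    by case: (sct ht hx).
  have H2 : forall x, 0 < x -> f x = 0 -> x = 1.
    move=> x hx; rewrite fE => /eqP; rewrite mulf_eq0 invr_eq0 (gt_eqF tt) orbF => /eqP.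
    by case: (sct ht hx).
  have H3 : f 1 = 0.
    by rewrite fE powR1 mulr1; apply/eqP; rewrite mulf_eq0; apply/orP; left; apply/eqP; ring.
  exact: (@finish _ q nrm _ f (fun i => d1 0 i) (mt = m) (Kt = K) H0 nrm0 nrmE H1 H2 H3 d1p KE1).
have te : tau = 1 by apply/eqP; rewrite eq_le t1 leNgt tg1.
have [dm0|dmn0] := eqVneq (mt - m) 0; last first.
  split; first by rewrite leey.
  split => // -[h _]; move: dmn0; rewrite h subrr eqxx //.
have emt : mt = m by apply/eqP; rewrite -subr_eq0 dm0.
apply: efin_fin.
have T : \tr (M *m mlog M - A + 1%:M) = \sum_i (fun x => x * ln x - x + 1) (d1 0 i).
  rewrite /mlog FM {1}EM !mulmxA mulmxKV // -(mulmxA P1) mulmx_diag.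
  rewrite raddfD raddfB /= tr_conj // trA1 mxtrace1.
  rewrite sum_row !big_split /= sumrN sum1 //.
rewrite T.
have H1 : forall x : R, 0 < x -> 0 <= x * ln x - x + 1 by move=> x hx; case: (sc1 hx).
have H2 : forall x : R, 0 < x -> x * ln x - x + 1 = 0 -> x = 1 by move=> x hx; case: (sc1 hx).
have H3 : (1 : R) * ln 1 - 1 + 1 = 0 by rewrite ln1; ring.
have := @finish _ q 0 1 (fun x => x * ln x - x + 1) (fun i => d1 0 i) True (Kt = K)
  ltr01 (lexx 0) (conj (fun _ => I) (fun _ => erefl)) H1 H2 H3 d1p KE1.
rewrite mulr0 add0r => -[g1 [g2 g3]].
split => //; split; first by move=> /g2 [_ e].
by move=> [_ e]; exact: g3 (conj I e).
Qed.
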